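(* Fix $n\in\mathbb Z_{\ge2}$ and $k\in\mathbb Z_{\ge1}$, and let $\searrow_n=n(n-1)\cdots1$. Then $$\dim P^{\mathrm{Av}(\searrow_n)}_k=|\mathrm{Av}_k(\searrow_n)|-|\mathrm{Av}_{k-1}(\searrow_n)|.$$
   Context: $\mathcal S_m$ is the set of permutations of $[m]$. For $I=\{i_1<\dots<i_m\}$, $\mathrm{pat}_I(\sigma)$ is the unique permutation with entries in the same relative order as $\sigma(i_1),\dots,\sigma(i_m)$. $\sigma$ avoids $\pi$ if no $I$ has $\mathrm{pat}_I(\sigma)=\pi$; $\mathrm{Av}_m(\searrow_n)$ is the set of size-$m$ permutations avoiding $\searrow_n$, with $\mathrm{Av}_0(\searrow_n)$ consisting of the empty permutation, and $\mathrm{Av}(\searrow_n)=\bigcup_{m\ge1}\mathrm{Av}_m(\searrow_n)$. For $\pi\in\mathcal S_k,\sigma\in\mathcal S_m$, $\widetilde{\mathrm{c\text{-}occ}}(\pi,\sigma)$ is $1/m$ times the number of intervals $I=\{i,\dots,i+k-1\}$ with $\mathrm{pat}_I(\sigma)=\pi$. $P^{\mathrm{Av}(\searrow_n)}_k$ is the set of $\vec v\in[0,1]^{\mathcal S_k}$ for which there is a sequence $(\sigma^m)$ in $\mathrm{Av}(\searrow_n)$ with $|\sigma^m|\to\infty$ and $\widetilde{\mathrm{c\text{-}occ}}(\pi,\sigma^m)\to\vec v_\pi$ for all $\pi\in\mathcal S_k$. This set is convex; its dimension is the dimension of its affine hull. *)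

(* Defs.v *)
From HB Require Import structures.
From mathcomp Require Import all_boot all_order all_algebra all_fingroup.
From mathcomp Require Import reals.
Set Implicit Arguments. Unset Strict Implicit. Unset Printing Implicit Defensive.
Import Order.TTheory GRing.Theory Num.Theory.

(* Permutations of [m] are 'S_m (permutations of 'I_m = {0,..,m-1}). *)

Definition decr (n : nat) : 'S_n := perm (@rev_ord_inj n).

(* value of sigma at position x (0-based), 0 if out of range *)
Definition pv (m : nat) (s : 'S_m) (x : nat) : nat :=
  match insub x with Some i => val (s i) | None => 0%N end.

Definition pat_at (k m : nat) (pi : 'S_k) (s : 'S_m) (idx : 'I_k -> nat) : bool :=
  [forall j : 'I_k, forall j' : 'I_k,
     (pi j < pi j')%N == (pv s (idx j) < pv s (idx j'))%N].

Definition contains (k m : nat) (pi : 'S_k) (s : 'S_m) : bool :=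
  [exists idx : {ffun 'I_k -> 'I_m},
     [forall j : 'I_k, forall j' : 'I_k, (j < j')%N ==> (idx j < idx j')%N]
     && pat_at pi s (fun j => val (idx j))].

Definition avoids (k m : nat) (pi : 'S_k) (s : 'S_m) : bool := ~~ contains pi s.

Definition Av (n m : nat) : {set 'S_m} := [set s : 'S_m | avoids (decr n) s].

Definition cocc_count (k m : nat) (pi : 'S_k) (s : 'S_m) : nat :=
  #|[set i : 'I_m | (i + k <= m)%N && pat_at pi s (fun j => (i + j)%N)]|.

Definition cocc (R : realType) (k m : nat) (pi : 'S_k) (s : 'S_m) : R :=
  ((cocc_count pi s)%:R / m%:R)%R.

Definition Pset (R : realType) (n k : nat) (v : 'S_k -> R) : Prop :=
  (forall pi, (0 <= v pi <= 1)%R) /\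
  exists (sz : nat -> nat) (sig : forall t, 'S_(sz t)),
    (forall t, (0 < sz t)%N /\ sig t \in Av n (sz t)) /\
    (forall N, exists T, forall t, (T <= t)%N -> (N <= sz t)%N) /\
    (forall pi (e : R), (0 < e)%R -> exists T, forall t, (T <= t)%N ->
        (`| cocc R pi (sig t) - v pi | < e)%R).

Definition aff_indep (R : realType) (I : finType) (d : nat) (v : 'I_d.+1 -> (I -> R)) : Prop :=
  forall c : 'I_d -> R,
    (forall x : I, (\sum_(i < d) c i * (v (lift ord0 i) x - v ord0 x))%R = 0%R) ->
    forall i, c i = 0%R.

Definition has_affine_dim (R : realType) (I : finType) (S : (I -> R) -> Prop) (d : nat) : Prop :=
  (exists v : 'I_d.+1 -> (I -> R), (forall i, S (v i)) /\ aff_indep v) /\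
  (forall v : 'I_d.+2 -> (I -> R), (forall i, S (v i)) -> ~ aff_indep v).

(* Main.v *)
Require Import Defs.
From HB Require Import structures.
From mathcomp Require Import all_boot all_order all_algebra all_fingroup.
From mathcomp Require Import reals.
From mathcomp Require Import zify ring lra.
Set Implicit Arguments. Unset Strict Implicit. Unset Printing Implicit Defensive.
Import Order.TTheory GRing.Theory Num.Theory.
Lemma pvE m (s : 'S_m) (i : 'I_m) : pv s i = s i.
Proof. by rewrite /pv valK. Qed.

Lemma pv_lt m (s : 'S_m) x : x < m -> pv s x < m.
Proof. by move=> Hx; rewrite (_ : x = val (Ordinal Hx)) // pvE. Qed.

Lemma pv_inj m (s : 'S_m) x y : x < m -> y < m -> pv s x = pv s y -> x = y.
Proof.
move=> Hx Hy; rewrite (_ : x = val (Ordinal Hx)) // (_ : y = val (Ordinal Hy)) //.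
by rewrite !pvE => /val_inj /perm_inj ->.
Qed.

Definition mkfun N (f : nat -> nat) (i : 'I_N) : 'I_N := insubd i (f i).

Definition mkperm N (f : nat -> nat) : 'S_N :=
  odflt 1%g [pick s : 'S_N | [forall i, s i == @mkfun N f i]].

Lemma pv_mkperm N f :
  (forall x, x < N -> f x < N) ->
  (forall x y, x < N -> y < N -> f x = f y -> x = y) ->
  forall x, x < N -> pv (mkperm N f) x = f x.
Proof.
move=> Hr Hi x Hx.
have Hinj: injective (@mkfun N f).
  move=> i j; rewrite /mkfun => /(congr1 val).
  have Hf : forall k : 'I_N, f k \in (fun x => x < N) by move=> k; exact: (Hr _ (ltn_ord k)).
  rewrite !insubdK ?Hf // => /Hi H; apply: val_inj; exact: H.
rewrite /mkperm; case: pickP => [s /forallP Hs|H]; last first.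
  by have := H (perm Hinj); move/forallP; case => i; rewrite permE.
rewrite (_ : x = val (Ordinal Hx)) // pvE /= (eqP (Hs _)) /mkfun insubdK //; exact: (Hr _ Hx).
Qed.
Lemma card_ord_count m (P : pred nat) : #|[set i : 'I_m | P i]| = count P (iota 0 m).
Proof.
rewrite cardsE cardE /enum_mem size_filter -val_enum_ord count_map.
by rewrite enumT; apply: eq_count.
Qed.

Lemma count_iota_lt k x : x <= k -> count (fun y => y < x) (iota 0 k) = x.
Proof.
move=> H; rewrite -(subnKC H) iotaD count_cat add0n.
rewrite (@eq_in_count _ _ predT); last by move=> y; rewrite mem_iota.
rewrite count_predT size_iota (@eq_in_count _ _ pred0) ?count_pred0 ?addn0 //.
by move=> y; rewrite mem_iota /= => /andP [H1 _]; rewrite ltnNge H1.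
Qed.

Lemma perm_rank k (p : 'S_k) x : x <= k -> #|[set j | p j < x]| = x.
Proof.
move=> Hx.
have -> : [set j | p j < x] = p @^-1: [set y : 'I_k | y < x].
  by apply/setP => j; rewrite !inE.
rewrite card_preimset; last exact: perm_inj.
by rewrite (@card_ord_count k (fun y => y < x)) count_iota_lt.
Qed.
Lemma perm_order_uniq k (p q : 'S_k) :
  (forall i j, (p i < p j) = (q i < q j)) -> p = q.
Proof.
move=> H; apply/permP => i; apply: val_inj => /=.
rewrite -(@perm_rank k p (p i)) 1?ltnW // -(@perm_rank k q (q i)) 1?ltnW //.
by apply: eq_card => j; rewrite !inE H.
Qed.
Definition perF (P : nat) (s : nat -> nat) (x : nat) : nat := x %/ P * P + s (x %% P).

Definition sgood P (s : nat -> nat) :=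
  (forall x, x < P -> s x < P) /\ (forall x y, x < P -> y < P -> s x = s y -> x = y).


Definition Gw k (tau : 'S_k) (F : nat -> nat) (x : nat) : bool :=
  [forall j : 'I_k, forall j' : 'I_k, (tau j < tau j') == (F (x + j) < F (x + j'))].

Definition favoid n P (s : nat -> nat) : Prop :=
  forall o : 'I_n -> nat, (forall j, o j < P) ->
    (forall j j' : 'I_n, j < j' -> o j < o j' /\ s (o j') < s (o j)) -> False.

Lemma count_shift_per (G : nat -> bool) P :
  (forall x, G (x + P) = G x) -> forall r, count G (iota 0 (r * P)) = r * count G (iota 0 P).
Proof.
move=> HG.
have HGr : forall r x, G (r * P + x) = G x.
  elim=> [|r IH] x; first by rewrite mul0n add0n.
  by rewrite mulSnr -addnA (addnC P) addnA HG IH.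
elim=> [|r IH]; first by rewrite !mul0n.
rewrite mulSnr iotaD count_cat IH add0n -{1}(addn0 (r * P)) iotaDl count_map.
rewrite mulSnr; congr (_ + _); apply: eq_count => x /=; exact: HGr.
Qed.

Lemma count_split_le (T : Type) (a g : pred T) (l : seq T) :
  count g l <= count (fun x => a x && g x) l + count (predC a) l.
Proof. elim: l => //= y l IH; case: (a y); case: (g y) => /=; lia. Qed.

Lemma count_tail_le N k : count (fun x => N < x + k) (iota 0 N) <= k.
Proof.
case: (leqP k N) => H.
  rewrite -(subnK H) iotaD count_cat add0n.
  rewrite (@eq_in_count _ _ pred0) ?count_pred0 ?add0n.
    by apply: (leq_trans (count_size _ _)); rewrite size_iota.
  move=> x; rewrite mem_iota /= => Hx; apply/negbTE; rewrite -leqNgt; lia.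
by apply: (leq_trans (count_size _ _)); rewrite size_iota ltnW.
Qed.

Lemma decr_lt n (j j' : 'I_n) : (decr n j < decr n j') = (j' < j).
Proof. rewrite /decr !permE /=; have := ltn_ord j; have := ltn_ord j'; lia. Qed.

Section Per.
Variables (P : nat) (s : nat -> nat).
Hypothesis P0 : 0 < P.
Hypothesis Hs1 : forall x, x < P -> s x < P.
Hypothesis Hs2 : forall x y, x < P -> y < P -> s x = s y -> x = y.

Lemma perF_div x : perF P s x %/ P = x %/ P.
Proof.
rewrite /perF divnMDl // (@divn_small (s (x %% P))) ?addn0 //; apply: Hs1; exact: ltn_pmod.
Qed.

Lemma perF_mod x : perF P s x %% P = s (x %% P).
Proof.
rewrite /perF modnMDl (@modn_small (s (x %% P))) //; apply: Hs1; exact: ltn_pmod.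
Qed.

Lemma perF_inj x y : perF P s x = perF P s y -> x = y.
Proof.
move=> E; have E1 := perF_div x; have E2 := perF_mod x.
rewrite E perF_div in E1; rewrite E perF_mod in E2.
have E3 : x %% P = y %% P.
  by apply: Hs2; rewrite ?ltn_pmod //.
by rewrite (divn_eq x P) (divn_eq y P) E1 E3.
Qed.

Lemma perF_lt r x : x < r * P -> perF P s x < r * P.
Proof.
move=> Hx; rewrite /perF.
have H1 : s (x %% P) < P by apply: Hs1; exact: ltn_pmod.
have H2 : x %/ P < r by rewrite ltn_divLR.
nia.
Qed.

Lemma perF_shift x : perF P s (x + P) = perF P s x + P.
Proof.
rewrite /perF modnDr divnDr ?dvdnn // divnn P0 mulnDl mul1n; lia.
Qed.

Lemma perF_block x y : x < y -> perF P s y < perF P s x -> x %/ P = y %/ P.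
Proof.
move=> Hxy Hlt; rewrite /perF in Hlt.
have H1 : s (x %% P) < P by apply: Hs1; exact: ltn_pmod.
have H2 : x %/ P <= y %/ P by apply: leq_div2r; exact: ltnW.
have [//|H3] : x %/ P = y %/ P \/ x %/ P < y %/ P by lia.
have : x %/ P * P + s (x %% P) < y %/ P * P.
  by apply: (@leq_trans ((x %/ P).+1 * P)); [rewrite mulSn; lia | rewrite leq_mul2r H3 orbT].
lia.
Qed.

Local Notation F := (perF P s).

Lemma Gw_shift k (tau : 'S_k) x : Gw tau F (x + P) = Gw tau F x.
Proof.
rewrite /Gw; apply: eq_forallb => j; apply: eq_forallb => j'.
by rewrite (addnAC x P j) (addnAC x P j') !perF_shift // ltn_add2r.
Qed.

Lemma pv_sig r x : x < r * P -> pv (mkperm (r * P) F) x = F x.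
Proof.
apply: pv_mkperm => [y Hy|y z _ _]; first exact: perF_lt.
exact: perF_inj.
Qed.

Lemma cocc_count_sig k (tau : 'S_k) r :
  cocc_count tau (mkperm (r * P) F) =
  count (fun x => (x + k <= r * P) && Gw tau F x) (iota 0 (r * P)).
Proof.
rewrite /cocc_count (@card_ord_count (r * P)
   (fun i => (i + k <= r * P) && pat_at tau (mkperm (r * P) F) (fun j => i + j))).
apply: eq_in_count => x _ /=; case H: (x + k <= r * P) => //=.
rewrite /pat_at /Gw; apply: eq_forallb => j; apply: eq_forallb => j'.
rewrite !pv_sig //.
  by apply: (leq_trans _ H); rewrite ltn_add2l.
by apply: (leq_trans _ H); rewrite ltn_add2l.
Qed.

Lemma sig_avoid n r : 2 <= n -> favoid n P s -> mkperm (r * P) F \in Av n (r * P).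
Proof.
move=> Hn Hfa; rewrite inE /avoids; apply/negP => /existsP [idx /andP [/forallP Hinc Hpat]].
have Hdec : forall j j' : 'I_n, j < j' -> F (idx j') < F (idx j).
  move=> j j' Hjj'; move/forallP: Hpat => /(_ j') /forallP /(_ j) /eqP.
  by rewrite decr_lt Hjj' !pv_sig ?ltn_ord // => <-.
have Hi : forall j j' : 'I_n, j < j' -> idx j < idx j'.
  by move=> j j' H; move/forallP: (Hinc j) => /(_ j') /implyP; apply.
case: n Hn idx Hinc Hpat Hdec Hi Hfa => [//|n'] Hn idx _ _ Hdec Hi Hfa.
have Hq : forall j, idx j %/ P = idx ord0 %/ P.
  move=> j; case: (posnP j) => Hj.
    by rewrite (_ : j = ord0) //; apply: val_inj.
  by symmetry; apply: perF_block => //; [exact: Hi | exact: Hdec].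
apply: (Hfa (fun j => idx j %% P)) => [j|j j' Hjj']; first exact: ltn_pmod.
have E1 := divn_eq (idx j) P; have E2 := divn_eq (idx j') P.
have H1 := Hi _ _ Hjj'; have H2 := Hdec _ _ Hjj'.
have Q1 := Hq j; have Q2 := Hq j'.
rewrite /perF Q1 Q2 in H2; rewrite Q1 in E1; rewrite Q2 in E2.
split; lia.
Qed.

End Per.

Section PerPoint.
Variable R : realType.
Local Open Scope ring_scope.

Lemma per_point n k P s :
  (0 < P)%N -> (forall x, x < P -> s x < P)%N ->
  (forall x y, x < P -> y < P -> s x = s y -> x = y)%N ->
  (2 <= n)%N -> favoid n P s ->
  @Pset R n k (fun tau => (count (Gw tau (perF P s)) (iota 0 P))%:R / P%:R).
Proof.
move=> P0 Hs1 Hs2 Hn Hfa.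
have HP : (0 : R) < P%:R by rewrite ltr0n.
split.
  move=> pi; apply/andP; split; first by rewrite divr_ge0 // ler0n.
  rewrite ler_pdivrMr // mul1r ler_nat.
  by apply: (leq_trans (count_size _ _)); rewrite size_iota.
exists (fun t => t.+1 * P)%N, (fun t => mkperm (t.+1 * P) (perF P s)).
split; first by move=> t; split; [rewrite muln_gt0 P0 | exact: sig_avoid].
split; first by move=> N; exists N => t Ht; nia.
move=> pi e He.
set c := count (Gw pi (perF P s)) (iota 0 P).
have Hke : 0 <= k%:R / e by rewrite divr_ge0 // ?ler0n // ltW.
exists (Num.Def.archi_bound (k%:R / e)) => t Ht.
rewrite /cocc cocc_count_sig //.
set N := (t.+1 * P)%N.
set A := count _ (iota 0 N).
have HA1 : (A <= t.+1 * c)%N.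
  rewrite -count_shift_per; last exact: Gw_shift.
  by apply: sub_count => x /andP [].
have HA2 : (t.+1 * c <= A + k)%N.
  rewrite -count_shift_per; last exact: Gw_shift.
  apply: (leq_trans (count_split_le (fun x => x + k <= N)%N _ _)).
  rewrite leq_add2l; apply: leq_trans (count_tail_le N k).
  by apply: sub_count => x /=; rewrite ltnNge.
have HN : (0 : R) < N%:R by rewrite ltr0n muln_gt0 P0.
have Ev : c%:R / P%:R = (t.+1 * c)%N%:R / N%:R :> R.
  rewrite /N !natrM; field; by rewrite (gt_eqF HP) /= addrC natr1 pnatr_eq0.
have HNi : (0 : R) <= N%:R^-1 by rewrite invr_ge0 ltW.
rewrite Ev -mulrBl normrM (ger0_norm HNi) ltr_pdivrMr //.
have H1 : `|A%:R - (t.+1 * c)%N%:R| <= k%:R :> R.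
  have Ha : (A%:R : R) <= (t.+1 * c)%N%:R by rewrite ler_nat.
  have Hb : ((t.+1 * c)%N%:R : R) <= A%:R + k%:R by rewrite -natrD ler_nat.
  rewrite ler_norml; apply/andP; split; lra.
have H2 : k%:R / e < N%:R.
  apply: (lt_le_trans (archi_boundP Hke)); rewrite ler_nat.
  by apply: (leq_trans Ht); rewrite /N; nia.
rewrite ltr_pdivrMr // in H2.
lra.
Qed.

End PerPoint.
Lemma count_sub_split (T : Type) (a b : pred T) (l : seq T) :
  (forall y, a y -> b y) ->
  count b l = count a l + count (fun y => b y && ~~ a y) l.
Proof.
move=> Hab; elim: l => //= z l IH; rewrite IH.
case Ha: (a z); first by rewrite (Hab _ Ha) /=; lia.
by case: (b z) => /=; lia.
Qed.

Lemma count_lt_strict (T : eqType) (a b : pred T) (l : seq T) y :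
  (forall y, a y -> b y) -> y \in l -> b y -> ~~ a y -> count a l < count b l.
Proof.
move=> Hab Hy Hb Ha; rewrite (count_sub_split _ Hab) -addn1 leq_add2l.
rewrite -has_count; apply/hasP; exists y => //; by rewrite Hb Ha.
Qed.

Definition rk m (s : 'S_m) k x (j : nat) :=
  count (fun j' => pv s (x + j') < pv s (x + j)) (iota 0 k).

Lemma rk_lt_iff m (s : 'S_m) k x j j' : x + k <= m -> j < k -> j' < k ->
  (rk s k x j < rk s k x j') = (pv s (x + j) < pv s (x + j')).
Proof.
move=> Hm Hj Hj'.
have Hlt : forall i i', i < k -> i' < k -> pv s (x + i) < pv s (x + i') ->
    rk s k x i < rk s k x i'.
  move=> i i' Hi Hi' H; apply: (count_lt_strict (y := i)).
  - by move=> z Hz; exact: ltn_trans Hz H.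
  - by rewrite mem_iota.
  - exact: H.
  - by rewrite ltnn.
case: (ltngtP (pv s (x + j)) (pv s (x + j'))) => H.
- by rewrite Hlt.
- by apply/negbTE; rewrite -leqNgt; apply: ltnW; apply: Hlt.
- have Ejj : j = j'.
    have : x + j = x + j' by apply: (@pv_inj m s); [lia|lia|exact: H].
    lia.
  by rewrite Ejj ltnn.
Qed.

Lemma rk_range m (s : 'S_m) k x j : j < k -> rk s k x j < k.
Proof.
move=> Hj; rewrite /rk -{2}(size_iota 0 k) -(count_predC (fun j' => pv s (x + j') < pv s (x + j))).
rewrite -{1}(addn0 (count _ _)) ltn_add2l -has_count; apply/hasP; exists j.
  by rewrite mem_iota.
by rewrite /= ltnn.
Qed.

Lemma pat_exists m (s : 'S_m) k x : x + k <= m ->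
  exists pi : 'S_k, pat_at pi s (fun j => x + j).
Proof.
move=> Hm; exists (mkperm k (rk s k x)).
have Hinj : forall y z, y < k -> z < k -> rk s k x y = rk s k x z -> y = z.
  move=> y z Hy Hz E.
  have E1 := @rk_lt_iff m s k x y z Hm Hy Hz; have E2 := @rk_lt_iff m s k x z y Hm Hz Hy.
  rewrite E ltnn in E1 E2.
  have Hv : pv s (x + y) = pv s (x + z).
    by case: (ltngtP (pv s (x + y)) (pv s (x + z))) => // H;
      [rewrite H in E1 | rewrite H in E2].
  have : x + y = x + z by apply: (@pv_inj m s); [lia|lia|exact: Hv].
  lia.
apply/forallP => a; apply/forallP => b.
rewrite -!pvE !pv_mkperm ?rk_lt_iff //; exact: rk_range.
Qed.

Lemma pat_uniq m (s : 'S_m) k (pi pi' : 'S_k) idx :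
  pat_at pi s idx -> pat_at pi' s idx -> pi = pi'.
Proof.
move=> /forallP H1 /forallP H2; apply: perm_order_uniq => i j.
by move/forallP: (H1 i) => /(_ j) /eqP ->; move/forallP: (H2 i) => /(_ j) /eqP ->.
Qed.

Lemma window_contains m (s : 'S_m) k (pi : 'S_k) n x : x + k <= m ->
  pat_at pi s (fun j => x + j) -> contains (decr n) pi -> contains (decr n) s.
Proof.
move=> Hm /forallP Hpat /existsP [idx /andP [/forallP Hinc /forallP Hp]].
have H : forall j, x + idx j < m.
  by move=> j; apply: (leq_trans _ Hm); rewrite ltn_add2l.
apply/existsP; exists [ffun j => Ordinal (H j)]; apply/andP; split.
  apply/forallP => j; apply/forallP => j'; apply/implyP => Hjj'.
  rewrite !ffunE /= ltn_add2l.
  by move/forallP: (Hinc j) => /(_ j') /implyP; apply.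
apply/forallP => j; apply/forallP => j'; rewrite !ffunE /=.
move/forallP: (Hp j) => /(_ j') /eqP ->.
by rewrite !pvE; move/forallP: (Hpat (idx j)) => /(_ (idx j')).
Qed.

Lemma sum_cocc_count m (s : 'S_m) k (C : pred 'S_k) :
  \sum_(pi | C pi) cocc_count pi s =
  count (fun x => (x + k <= m) && [exists pi, C pi && pat_at pi s (fun j => x + j)])
    (iota 0 m).
Proof.
under eq_bigr => pi _ do rewrite /cocc_count
  (@card_ord_count m (fun x => (x + k <= m) && pat_at pi s (fun j => x + j))).
elim: (iota 0 m) => [|y l IH]; first by rewrite big1.
rewrite /= big_split /= IH; congr (_ + _).
case: (y + k <= m) => /=; last by rewrite big1.
case: existsP => [[pi0 /andP [Cpi0 Hp0]] | Hn].
  rewrite (bigD1 pi0) //= Hp0 big1 // => pi /andP [Cpi Hne].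
  case Hp: (pat_at pi s _) => //.
  by rewrite (pat_uniq Hp Hp0) eqxx in Hne.
rewrite big1 // => pi Cpi; case Hp: (pat_at pi s _) => //.
by exfalso; apply: Hn; exists pi; rewrite Cpi Hp.
Qed.

Definition RelO k k' (o : nat) (pi : 'S_k) (rho : 'S_k') : bool :=
  [forall j : 'I_k', forall j' : 'I_k', (rho j < rho j') == (pv pi (o + j) < pv pi (o + j'))].

Lemma rel_pat m (s : 'S_m) k k' o x (pi : 'S_k) (rho : 'S_k') :
  o + k' <= k -> pat_at pi s (fun j => x + j) ->
  RelO o pi rho = pat_at rho s (fun j => x + o + j).
Proof.
move=> Hk /forallP Hpat; apply: eq_forallb => j; apply: eq_forallb => j'.
have Hj : o + j < k by apply: (leq_trans _ Hk); rewrite ltn_add2l.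
have Hj' : o + j' < k by apply: (leq_trans _ Hk); rewrite ltn_add2l.
have := Hpat (Ordinal Hj); move/forallP => /(_ (Ordinal Hj')) /eqP.
rewrite -!pvE /= -!addnA => ->; done.
Qed.

Lemma count_prefix (f : pred nat) L m : L <= m ->
  count (fun x => (x < L) && f x) (iota 0 m) = count f (iota 0 L).
Proof.
move=> HL; rewrite -(subnKC HL) iotaD count_cat add0n.
have -> : count (fun x => (x < L) && f x) (iota 0 L) = count f (iota 0 L).
  by apply: eq_in_count => x; rewrite mem_iota /= => ->.
have -> : count (fun x => (x < L) && f x) (iota L (m - L)) = 0.
  rewrite (@eq_in_count _ _ pred0) ?count_pred0 //.
  by move=> x; rewrite mem_iota /= => /andP [H _]; rewrite ltnNge H.
by rewrite addn0.
Qed.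

Lemma flow_count m (s : 'S_m) k' (rho : 'S_k') : k'.+1 <= m ->
  \sum_(pi : 'S_k'.+1 | RelO 0 pi rho) cocc_count pi s <=
     \sum_(pi : 'S_k'.+1 | RelO 1 pi rho) cocc_count pi s + 1 /\
  \sum_(pi : 'S_k'.+1 | RelO 1 pi rho) cocc_count pi s <=
     \sum_(pi : 'S_k'.+1 | RelO 0 pi rho) cocc_count pi s + 1.
Proof.
move=> Hm.
have HA : forall o, o <= 1 ->
  \sum_(pi : 'S_k'.+1 | RelO o pi rho) cocc_count pi s =
  count (fun x => (x < m - k') && pat_at rho s (fun j => x + o + j)) (iota 0 m).
  move=> o Ho; rewrite sum_cocc_count; apply: eq_in_count => x _ /=.
  have -> : (x + k'.+1 <= m) = (x < m - k') by lia.
  case Hx: (x < m - k') => //=.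
  have Hx' : x + k'.+1 <= m by lia.
  have Hok : o + k' <= k'.+1 by lia.
  apply/existsP/idP => [[pi /andP [Hr Hp]]|Hp].
    by rewrite -(@rel_pat m s k'.+1 k' o x pi rho Hok Hp).
  have [pi0 Hp0] := pat_exists s Hx'.
  by exists pi0; rewrite Hp0 andbT (@rel_pat m s k'.+1 k' o x pi0 rho Hok Hp0).
set Q := fun y => pat_at rho s (fun j => y + j).
have E0 : \sum_(pi : 'S_k'.+1 | RelO 0 pi rho) cocc_count pi s = count Q (iota 0 (m - k')).
  rewrite HA // -(@count_prefix Q (m - k') m) ?leq_subr //; apply: eq_count => x /=.
  by rewrite addn0.
have E1 : \sum_(pi : 'S_k'.+1 | RelO 1 pi rho) cocc_count pi s = count Q (iota 1 (m - k')).
  rewrite HA // (@count_prefix (fun x => Q (x + 1)) (m - k') m) ?leq_subr //.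
  by rewrite -[1]/(1 + 0) iotaDl count_map; apply: eq_count => x /=; rewrite addnC.
have E2 : count Q (iota 0 (m - k')) + Q (m - k') = Q 0 + count Q (iota 1 (m - k')).
  have := congr1 (count Q) (iotaD 0 (m - k') 1).
  by rewrite addn1 count_cat /= add0n addn0 => ->.
rewrite E0 E1; case: (Q (m - k')) E2; case: (Q 0) => /=; lia.
Qed.

Lemma total_count m (s : 'S_m) k' : k'.+1 <= m ->
  \sum_(pi : 'S_k'.+1) cocc_count pi s = m - k'.
Proof.
move=> Hm; rewrite (sum_cocc_count s predT).
rewrite -[RHS](size_iota 0 (m - k')) -count_predT -(@count_prefix predT (m - k') m) ?leq_subr //.
apply: eq_in_count => x _ /=.
have -> : (x + k'.+1 <= m) = (x < m - k') by lia.
case Hx: (x < m - k') => //=.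
have Hx' : x + k'.+1 <= m by lia.
have [pi0 Hp0] := pat_exists s Hx'.
by apply/existsP; exists pi0.
Qed.

Lemma zero_count n m (s : 'S_m) k (pi : 'S_k) :
  s \in Av n m -> contains (decr n) pi -> cocc_count pi s = 0.
Proof.
rewrite inE /avoids => Hs Hc; apply/eqP; rewrite cards_eq0; apply/eqP/setP => i.
rewrite !inE; apply/negbTE/negP => /andP [Hi Hp].
by move/negP: Hs; apply; exact: window_contains Hi Hp Hc.
Qed.

Section Lim.
Variable R : realType.
Local Open Scope ring_scope.

Lemma lim_lin n k (v : 'S_k -> R) (a : 'S_k -> R) (b C : R) :
  0 <= C -> @Pset R n k v ->
  (forall m (s : 'S_m), (0 < m)%N -> s \in Av n m -> (k <= m)%N ->
     `|\sum_pi a pi * cocc R pi s - b| <= C / m%:R) ->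
  \sum_pi a pi * v pi = b.
Proof.
move=> HC [_ [sz [sig [Hsig [Hsz Hconv]]]]] Hbound.
set X := \sum_pi a pi * v pi.
case: (eqVneq (X - b) 0) => [/eqP|HD0]; first by rewrite subr_eq0 => /eqP.
exfalso.
set D := `|X - b|.
have HD : 0 < D by rewrite normr_gt0.
set A := \sum_pi `|a pi|.
have HA : 0 <= A by apply: sumr_ge0 => pi _; exact: normr_ge0.
set e1 := D / (2 * (A + 1)).
have He1 : 0 < e1 by rewrite divr_gt0 // mulr_gt0 // ltr_pwDr.
have F1 : A * e1 + e1 = D / 2.
  by rewrite /e1; field; apply/lt0r_neq0; rewrite ltr_pwDr.
have [Tf HTf] := fin_all_exists (fun pi => Hconv pi e1 He1).
have H2CD : 0 <= 2 * C / D by rewrite divr_ge0 // ?mulr_ge0 // ltW.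
have [T2 HT2] := Hsz (maxn k (Num.Def.archi_bound (2 * C / D))).
set t := maxn (\max_pi Tf pi) T2.
have [Hm0 Hav] := Hsig t.
have Hsz2 := HT2 t (leq_maxr _ _).
have Hkm : (k <= sz t)%N by apply: leq_trans Hsz2; exact: leq_maxl.
have Hb := Hbound _ (sig t) Hm0 Hav Hkm.
set Y := \sum_pi a pi * cocc R pi (sig t).
have HXY : `|X - Y| <= A * e1.
  rewrite /X /Y -sumrB mulr_suml.
  apply: (le_trans (ler_norm_sum _ _ _)); apply: ler_sum => pi _.
  rewrite -mulrBr normrM ler_wpM2l // distrC; apply: ltW; apply: HTf.
  by apply: leq_trans (leq_maxl _ _); exact: leq_bigmax.
have Hm : (0 : R) < (sz t)%:R by rewrite ltr0n.
have HCm : C / (sz t)%:R < D / 2.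
  have H1 : 2 * C / D < (sz t)%:R.
    apply: (lt_le_trans (archi_boundP H2CD)); rewrite ler_nat.
    by apply: leq_trans Hsz2; exact: leq_maxr.
  rewrite ltr_pdivrMr // in H1.
  rewrite ltr_pdivrMr //.
  have -> : D / 2 * (sz t)%:R = ((sz t)%:R * D) / 2 by rewrite mulrAC (mulrC D).
  lra.
have := ler_distD Y X b; rewrite -/D; lra.
Qed.

End Lim.
Section Props.
Variable R : realType.
Local Open Scope ring_scope.

Lemma sum_ind (I : finType) (P : pred I) (f : I -> R) :
  \sum_i (P i)%:R * f i = \sum_(i | P i) f i.
Proof.
by rewrite [RHS]big_mkcond; apply: eq_bigr => i _; case: (P i); rewrite ?mul1r ?mul0r.
Qed.

Lemma sum_pred1 (I : finType) (j : I) (f : I -> R) :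
  \sum_i (i == j)%:R * f i = f j.
Proof. by rewrite sum_ind big_pred1_eq. Qed.

Lemma Pset_zero n k (v : 'S_k -> R) (pi : 'S_k) :
  @Pset R n k v -> contains (decr n) pi -> v pi = 0.
Proof.
move=> Hv Hc; rewrite -(sum_pred1 pi v).
apply: (@lim_lin R n k v _ _ 0 (lexx 0) Hv) => m s Hm Hs Hkm.
rewrite sum_pred1 /cocc (zero_count Hs Hc) mulr0n !mul0r subr0 normr0.
done.
Qed.

End Props.
Section Props2.
Variable R : realType.
Local Open Scope ring_scope.
Lemma Pset_sum1 n k' (v : 'S_k'.+1 -> R) :
  @Pset R n k'.+1 v -> \sum_pi v pi = 1.
Proof.
move=> Hv.
have -> : \sum_pi v pi = \sum_pi 1 * v pi by apply: eq_bigr => pi _; rewrite mul1r.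
apply: (@lim_lin R n k'.+1 v _ _ k'%:R (ler0n _ _) Hv) => m s Hm Hs Hkm.
have Hm' : (0 : R) < m%:R by rewrite ltr0n.
under eq_bigr => pi _ do rewrite mul1r.
rewrite /cocc -mulr_suml -natr_sum total_count // natrB; last by lia.
rewrite mulrBl divff ?lt0r_neq0 // addrAC subrr add0r.
by rewrite normrN ger0_norm // divr_ge0 // ler0n.
Qed.

End Props2.
Section Props3.
Variable R : realType.
Local Open Scope ring_scope.
Lemma Pset_flow n k' (v : 'S_k'.+1 -> R) (rho : 'S_k') :
  @Pset R n k'.+1 v -> \sum_(pi | RelO 0 pi rho) v pi = \sum_(pi | RelO 1 pi rho) v pi.
Proof.
move=> Hv; apply/eqP; rewrite -subr_eq0; apply/eqP.
rewrite -(sum_ind (fun pi => RelO 0 pi rho)) -(sum_ind (fun pi => RelO 1 pi rho)) -sumrB.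
under eq_bigr => pi _ do rewrite -mulrBl.
apply: (@lim_lin R n k'.+1 v _ _ 1 ler01 Hv) => m s Hm Hs Hkm.
have Hm' : (0 : R) < m%:R by rewrite ltr0n.
under eq_bigr => pi _ do rewrite mulrBl.
rewrite sumrB !sum_ind /cocc -!mulr_suml -!natr_sum subr0 -mulrBl normrM.
have HNi : (0 : R) <= m%:R^-1 by rewrite invr_ge0 ltW.
rewrite (ger0_norm HNi) ler_pM2r ?invr_gt0 //.
have [H1 H2] := flow_count s rho Hkm.
move: H1 H2; set S0 := (\sum_(pi | RelO 0 pi rho) cocc_count pi s)%N.
set S1 := (\sum_(pi | RelO 1 pi rho) cocc_count pi s)%N.
rewrite -!(ler_nat R) !natrD => H1 H2.
rewrite ler_norml; apply/andP; split; lra.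
Qed.

End Props3.
Definition RF k (pi : 'S_k) (c : nat) : bool :=
  [forall j : 'I_k, forall j' : 'I_k, (k - c <= j) && (j' < j) ==> (pi j' < pi j)].

Lemma RF_last k' (pi : 'S_k'.+1) : RF pi 1 -> pi ord_max = ord_max.
Proof.
move=> /forallP H; apply: val_inj => /=.
have Hj := H ord_max; set j0 := (pi^-1)%g ord_max.
case: (eqVneq j0 ord_max) => E.
  by rewrite -E /j0 permKV.
move/forallP: Hj => /(_ j0) /implyP Hj.
have : pi j0 < pi ord_max.
  apply: Hj; rewrite /= subSS subn0 leqnn /=.
  by rewrite ltn_neqAle E /= -ltnS ltn_ord.
by rewrite /j0 permKV /=; have := ltn_ord (pi ord_max); lia.
Qed.

Lemma RF_id k (pi : 'S_k) : RF pi k -> pi = 1%g.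
Proof.
move=> /forallP H; apply: perm_order_uniq => i j; rewrite !perm1.
case: (ltngtP i j) => Hij.
- by move/forallP: (H j) => /(_ i) /implyP; rewrite subnn Hij => ->.
- apply/negbTE; rewrite -leqNgt; apply: ltnW.
  by move/forallP: (H i) => /(_ j) /implyP; rewrite subnn Hij => ->.
- by rewrite (_ : i = j) ?ltnn //; apply: val_inj.
Qed.

Definition restr k' (pi : 'S_k'.+1) : 'S_k' := mkperm k' (pv pi).

Lemma pv_restr k' (pi : 'S_k'.+1) x : RF pi 1 -> x < k' -> pv (restr pi) x = pv pi x.
Proof.
move=> H1 Hx; apply: pv_mkperm => // [y Hy|y z Hy Hz]; last first.
  by apply: pv_inj; lia.
have Hl := RF_last H1.
have Hy1 : y < k'.+1 by lia.
have := pv_lt pi Hy1; rewrite ltnS leq_eqVlt => /orP [/eqP E|//].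
have E2 : pv pi y = pv pi (@ord_max k') by rewrite pvE Hl E.
have := pv_inj Hy1 (ltn_ord _) E2; rewrite /=; lia.
Qed.

Lemma RF_val k' (pi : 'S_k'.+1) (i : 'I_k'.+1) : RF pi 1 -> (pi i == k' :> nat) = (i == k' :> nat).
Proof.
move=> H; have Hl := RF_last H.
apply/eqP/eqP => E.
  have : pi i = pi ord_max by apply: val_inj; rewrite Hl /= E.
  by move/perm_inj => ->.
have -> : i = ord_max by apply: val_inj.
by rewrite Hl.
Qed.

Lemma rel0_restr k' (pi : 'S_k'.+1) : RF pi 1 -> RelO 0 pi (restr pi).
Proof.
move=> H; apply/forallP => j; apply/forallP => j'.
by rewrite -!pvE !pv_restr ?add0n.
Qed.

Lemma rel0_uniq k' (pi pi' : 'S_k'.+1) : RF pi 1 -> RF pi' 1 ->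
  RelO 0 pi' (restr pi) -> pi' = pi.
Proof.
move=> H H' /forallP Hr; apply: perm_order_uniq => i j.
have Hi := ltn_ord i; have Hj := ltn_ord j.
have Vi := RF_val i H; have Vi' := RF_val i H'.
have Vj := RF_val j H; have Vj' := RF_val j H'.
have Li := ltn_ord (pi i); have Li' := ltn_ord (pi' i).
have Lj := ltn_ord (pi j); have Lj' := ltn_ord (pi' j).
case: (ltngtP i k') => Ei; first (case: (ltngtP j k') => Ej).
- have := Hr (Ordinal Ei); move/forallP => /(_ (Ordinal Ej)) /eqP.
  by rewrite -!pvE !pv_restr //= !add0n !pvE.
- lia.
- move: Vi Vi' Vj Vj'; rewrite Ej eqxx (_ : (i == k' :> nat) = false); last by lia.
  move=> /eqP Vi /eqP Vi' /eqP Vj /eqP Vj'.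
  by rewrite Vj Vj'; apply/idP/idP; lia.
- lia.
- move: Vi Vi' Vj Vj'; rewrite Ei eqxx => /eqP Vi /eqP Vi' /eqP Vj /eqP Vj'.
  by rewrite Vi Vi'; apply/idP/idP; lia.
Qed.

Lemma RF_restr1 k' c (pi' : 'S_k'.+1) (rho : 'S_k') :
  RelO 1 pi' rho -> RF pi' c -> RF rho c.
Proof.
move=> /forallP Hr /forallP H; apply/forallP => j; apply/forallP => j'.
apply/implyP => /andP [Hj Hjj].
have Hj1 : 1 + j < k'.+1 by rewrite add1n ltnS.
have Hj1' : 1 + j' < k'.+1 by rewrite add1n ltnS.
move/forallP: (Hr j') => /(_ j) /eqP ->.
have := H (Ordinal Hj1); move/forallP => /(_ (Ordinal Hj1')) /implyP Hc.
rewrite (_ : 1 + j' = val (Ordinal Hj1')) // (_ : 1 + j = val (Ordinal Hj1)) // !pvE.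
apply: Hc; rewrite /=; apply/andP; split; lia.
Qed.

Lemma RF_ext0 k' c (pi : 'S_k'.+1) (rho : 'S_k') :
  RelO 0 pi rho -> RF pi 1 -> RF rho c -> RF pi c.+1.
Proof.
move=> /forallP Hr H1 /forallP H; apply/forallP => j; apply/forallP => j'.
apply/implyP => /andP [Hj Hjj].
case: (ltngtP j k') => Ej.
- have Ej' : j' < k' by lia.
  have := H (Ordinal Ej); move/forallP => /(_ (Ordinal Ej')) /implyP Hc.
  have Hc' : rho (Ordinal Ej') < rho (Ordinal Ej) by apply: Hc; rewrite /=; lia.
  move/forallP: (Hr (Ordinal Ej')) => /(_ (Ordinal Ej)) /eqP.
  by rewrite Hc' /= !add0n !pvE => <-.
- have := ltn_ord j; lia.
- move/forallP: H1 => /(_ j) /forallP /(_ j') /implyP; apply.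
  apply/andP; split; lia.
Qed.

Section Tree.
Variable R : realType.
Local Open Scope ring_scope.

Lemma tree_zero k' (z : 'S_k'.+1 -> R) :
  (forall pi, ~~ RF pi 1 -> z pi = 0) ->
  (forall rho : 'S_k', \sum_(pi | RelO 0 pi rho) z pi = \sum_(pi | RelO 1 pi rho) z pi) ->
  \sum_pi z pi = 0 ->
  forall pi, z pi = 0.
Proof.
move=> H0 Hf Hs.
have Hstep : forall pi, RF pi 1 -> z pi = \sum_(pi' | RelO 1 pi' (restr pi)) z pi'.
  move=> pi H1; rewrite -Hf (bigD1 pi) ?rel0_restr //= big1 ?addr0 // => pi' /andP [Hr Hne].
  case H1': (RF pi' 1); last by rewrite H0 ?H1'.
  by rewrite (rel0_uniq H1 H1' Hr) eqxx in Hne.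
have Hind : forall u pi, RF pi 1 -> ~~ RF pi u.+1 -> z pi = 0.
  elim=> [|u IH] pi H1 Hn; first by rewrite H1 in Hn.
  rewrite Hstep // big1 // => pi' Hr.
  case H1': (RF pi' 1); last by rewrite H0 ?H1'.
  apply: IH => //; apply/negP => Hu.
  have := RF_ext0 (rel0_restr H1) H1 (RF_restr1 Hr Hu).
  by rewrite (negbTE Hn).
have Hne : forall pi, pi != 1%g -> z pi = 0.
  move=> pi Hpi; case H1: (RF pi 1); last by rewrite H0 ?H1.
  apply: (Hind k') => //; apply/negP => Hk; move/RF_id: Hk => E.
  by rewrite E eqxx in Hpi.
have Hz1 : z 1%g = 0.
  by rewrite -Hs (bigD1 1%g) //= big1 ?addr0 // => pi /Hne.
move=> pi; case: (eqVneq pi 1%g) => [->|]; [exact: Hz1 | exact: Hne].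
Qed.

End Tree.

Definition ext k' (rho : 'S_k') : 'S_k'.+1 :=
  mkperm k'.+1 (fun x => if x < k' then pv rho x else k').

Lemma pv_ext k' (rho : 'S_k') x : x < k'.+1 ->
  pv (ext rho) x = if x < k' then pv rho x else k'.
Proof.
apply: pv_mkperm => [y Hy|y z Hy Hz].
  by case: ifP => // H; have := pv_lt rho H; lia.
case: ifP => Hy'; case: ifP => Hz' //.
- by apply: pv_inj.
- by have := pv_lt rho Hy'; lia.
- by have := pv_lt rho Hz'; lia.
- lia.
Qed.

Lemma RF_ext k' (rho : 'S_k') : RF (ext rho) 1.
Proof.
apply/forallP => j; apply/forallP => j'; apply/implyP => /andP [Hj Hjj].
have Ej : nat_of_ord j = k' by have := ltn_ord j; lia.
have Hj' : j' < k' by lia.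
rewrite -!pvE !pv_ext // Ej ltnn Hj'.
exact: pv_lt.
Qed.

Lemma ext_inj k' : injective (@ext k').
Proof.
move=> r1 r2 E; apply/permP => i; apply: val_inj => /=.
have Hi : i < k'.+1 by have := ltn_ord i; lia.
have := congr1 (fun p => pv p i) E => /=.
by rewrite !pv_ext // ltn_ord !pvE.
Qed.

Lemma ext_avoid n k' (rho : 'S_k') : 2 <= n -> rho \in Av n k' -> ext rho \in Av n k'.+1.
Proof.
move=> Hn; rewrite !inE /avoids; apply: contra => /existsP [idx /andP [/forallP Hinc Hpat]].
have Hdec : forall j j' : 'I_n, j < j' -> pv (ext rho) (idx j') < pv (ext rho) (idx j).
  move=> j j' Hjj'; move/forallP: Hpat => /(_ j') /forallP /(_ j) /eqP.
  by rewrite decr_lt Hjj' => <-.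
have Hi : forall j j' : 'I_n, j < j' -> idx j < idx j'.
  by move=> j j' H; move/forallP: (Hinc j) => /(_ j') /implyP; apply.
have Hlt : forall j, idx j < k'.
  move=> j; case: (ltnP (idx j) k') => // Hge.
  have Ej : nat_of_ord (idx j) = k' by have := ltn_ord (idx j); lia.
  case: (posnP j) => Hj0.
    have H1 : 1 < n by [].
    have := Hi j (Ordinal H1); rewrite Hj0 => /(_ isT).
    have := ltn_ord (idx (Ordinal H1)); lia.
  have H0 : 0 < n by lia.
  have Hj := Hdec (Ordinal H0) j Hj0.
  have Hi0 := Hi (Ordinal H0) j Hj0.
  rewrite !pv_ext ?ltn_ord // Ej ltnn in Hj.
  rewrite (_ : idx (Ordinal H0) < k') in Hj; last by lia.
  by have := pv_lt rho (_ : idx (Ordinal H0) < k'); lia.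
apply/existsP; exists [ffun j => Ordinal (Hlt j)]; apply/andP; split.
  apply/forallP => j; apply/forallP => j'; rewrite !ffunE /=.
  by move/forallP: (Hinc j) => /(_ j').
apply/forallP => j; apply/forallP => j'; rewrite !ffunE /=.
move/forallP: Hpat => /(_ j) /forallP /(_ j').
by rewrite !pv_ext ?ltn_ord // !Hlt.
Qed.

Lemma card_Dset n k' : 2 <= n ->
  #|Av n k'.+1 :\: [set pi | RF pi 1]| + #|Av n k'| <= #|Av n k'.+1|.
Proof.
move=> Hn; rewrite -(cardsID [set pi | RF pi 1] (Av n k'.+1)) addnC leq_add2r.
rewrite -(card_imset _ (@ext_inj k')); apply: subset_leq_card.
apply/subsetP => pi /imsetP [rho Hr ->].
by rewrite inE ext_avoid // inE RF_ext.
Qed.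
Section Upper.
Variable R : realType.
Local Open Scope ring_scope.

Lemma sum_comb k d (P : pred 'S_k) (c : 'I_d -> R) (w : 'I_d -> 'S_k -> R) (w0 : 'S_k -> R) :
  \sum_(pi | P pi) \sum_(i < d) c i * (w i pi - w0 pi) =
  \sum_(i < d) c i * (\sum_(pi | P pi) w i pi - \sum_(pi | P pi) w0 pi).
Proof.
rewrite exchange_big; apply: eq_bigr => i _; rewrite -sumrB mulr_sumr.
by apply: eq_bigr.
Qed.

Lemma upper_bound n k' d (v : 'I_d.+2 -> ('S_k'.+1 -> R)) :
  (2 <= n)%N -> (#|Av n k'.+1 :\: [set pi | RF pi 1]| <= d)%N ->
  (forall i, @Pset R n k'.+1 (v i)) -> ~ aff_indep v.
Proof.
move=> Hn HD Hv Hai.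
set Ds := Av n k'.+1 :\: [set pi | RF pi 1].
pose M : 'M[R]_(d.+1, #|Ds|) :=
  \matrix_(i, j) (v (lift ord0 i) (enum_val j) - v ord0 (enum_val j)).
have Hrk : (\rank M < d.+1)%N.
  by apply: (leq_ltn_trans (rank_leq_col M)); rewrite ltnS.
set K := kermx M.
have HK : K != 0.
  by rewrite -mxrank_eq0 mxrank_ker subn_eq0 -ltnNge.
have HKM : K *m M = 0 := mulmx_ker M.
clearbody K.
have [i0 [j0 Hij]] : exists i0 j0, K i0 j0 != 0.
  case: (pickP (fun ij : 'I_d.+1 * 'I_d.+1 => K ij.1 ij.2 != 0)) => [[i j] H|H].
    by exists i, j.
  exfalso; move/negP: HK; apply; apply/eqP/matrixP => i j.
  by move: (H (i, j)) => /= /negbFE /eqP ->; rewrite mxE.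
pose c := fun i => K i0 i.
pose z := fun x => \sum_(i < d.+1) c i * (v (lift ord0 i) x - v ord0 x).
have Hz : forall x, z x = 0.
  apply: tree_zero.
  - move=> x Hx; case Hav: (x \in Av n k'.+1).
      have HxD : x \in Ds by rewrite in_setD Hav inE Hx.
      have Ex : enum_val (enum_rank_in HxD x) = x := enum_rankK_in HxD HxD.
      have E := congr1 (fun A : 'M_(d.+1, #|Ds|) => A i0 (enum_rank_in HxD x)) HKM.
      rewrite /= !mxE in E; rewrite -[RHS]E /z; apply: eq_bigr => i _.
      by rewrite /c mxE Ex.
    move: Hav; rewrite inE /avoids => /negbFE Hc.
    by rewrite /z big1 // => i _; rewrite !(Pset_zero (Hv _) Hc) subrr mulr0.
  - move=> rho; rewrite /z !sum_comb; apply: eq_bigr => i _.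
    by rewrite !(@Pset_flow R n k' _ rho (Hv _)).
  - rewrite /z (sum_comb predT) big1 // => i _.
    by rewrite !(Pset_sum1 (Hv _)) subrr mulr0.
have := Hai c Hz j0; rewrite /c => E; by rewrite E eqxx in Hij.
Qed.

End Upper.
Lemma Gw_lt k (tau : 'S_k) F i : Gw tau F i ->
  forall j j' : 'I_k, (tau j < tau j') = (F (i + j) < F (i + j')).
Proof. by move=> /forallP H j j'; move/forallP: (H j) => /(_ j') /eqP. Qed.

Lemma RF_of_window k' (tau : 'S_k'.+1) F i : Gw tau F i ->
  (forall j, j < k' -> F (i + j) < F (i + k')) -> RF tau 1.
Proof.
move=> HG H; apply/forallP => j; apply/forallP => j'; apply/implyP => /andP [Hj Hjj].
have Ej : nat_of_ord j = k' by have := ltn_ord j; lia.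
rewrite (Gw_lt HG) Ej; apply: H; lia.
Qed.

Definition LF k (tau : 'S_k) (c : nat) : bool :=
  [forall j : 'I_k, forall j' : 'I_k, (j <= c) && (j < j') ==> (tau j < tau j')].

Lemma LF_full k' (pi : 'S_k'.+1) : LF pi k' -> RF pi 1.
Proof.
move=> /forallP H; apply/forallP => j; apply/forallP => j'; apply/implyP => /andP [_ Hjj].
by move/forallP: (H j') => /(_ j) /implyP; apply; rewrite Hjj andbT -ltnS.
Qed.

Definition sPi k (pi : 'S_k) x := if x < k then pv pi x else x.

Lemma sPi_good k (pi : 'S_k) :
  (forall x, x < k + k -> sPi pi x < k + k) /\
  (forall x y, x < k + k -> y < k + k -> sPi pi x = sPi pi y -> x = y).
Proof.
split.
  move=> x Hx; rewrite /sPi; case: ifP => // H; have := pv_lt pi H; lia.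
move=> x y Hx Hy; rewrite /sPi; case: ifP => Hx'; case: ifP => Hy' //.
- by apply: pv_inj.
- by have := pv_lt pi Hx'; lia.
- by have := pv_lt pi Hy'; lia.
Qed.

Lemma sPi_favoid n k (pi : 'S_k) : 2 <= n -> pi \in Av n k -> favoid n (k + k) (sPi pi).
Proof.
rewrite inE /avoids => Hn Hav o Ho Hdec; move/negP: Hav; apply.
have Hlt1 : forall j' : 'I_n, 0 < j' -> o j' < k.
  move=> j' Hj'; case: (ltnP (o j') k) => // Hge.
  have H0 : 0 < n by lia.
  have [H1 H2] := Hdec (Ordinal H0) j' Hj'.
  move: H2; rewrite /sPi (_ : o j' < k = false); last by lia.
  case: ifP => Hk0; last by lia.
  by have := pv_lt pi Hk0; lia.
have Hlt : forall j, o j < k.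
  move=> j; case: (posnP j) => Hj; last exact: Hlt1.
  have H1 : 1 < n by [].
  have := Hlt1 (Ordinal H1) isT; have := Hdec j (Ordinal H1); rewrite Hj => /(_ isT) [].
  lia.
apply/existsP; exists [ffun j => Ordinal (Hlt j)]; apply/andP; split.
  apply/forallP => j; apply/forallP => j'; apply/implyP => Hjj; rewrite !ffunE /=.
  by have [] := Hdec _ _ Hjj.
apply/forallP => j; apply/forallP => j'; rewrite !ffunE /= decr_lt.
have E : forall i, sPi pi (o i) = pv pi (o i) by move=> i; rewrite /sPi Hlt.
case: (ltngtP j j') => Hjj.
- have [_ H2] := Hdec _ _ Hjj; rewrite -!E; apply/eqP; lia.
- have [_ H2] := Hdec _ _ Hjj; rewrite -!E; apply/eqP; lia.
- by rewrite (_ : j = j') ?ltnn //; apply: val_inj.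
Qed.

Section Win.
Variables (k' : nat) (pi : 'S_k'.+1).
Local Notation k := k'.+1.
Local Notation Fp := (perF (k + k) (sPi pi)).

Lemma Fp_small y : y < k + k -> Fp y = sPi pi y.
Proof. by move=> Hy; rewrite /perF divn_small // modn_small // mul0n add0n. Qed.

Lemma Fp_big y : k + k <= y < k + k + (k + k) -> Fp y = sPi pi (y - (k + k)) + (k + k).
Proof.
move=> /andP [H1 H2].
have := @perF_shift (k + k) (sPi pi) (isT : 0 < k + k) (y - (k + k)).
by rewrite subnK // => ->; rewrite Fp_small //; lia.
Qed.

Lemma W0 : Gw pi Fp 0.
Proof.
apply/forallP => j; apply/forallP => j'.
have Hj := ltn_ord j; have Hj' := ltn_ord j'.
rewrite !add0n !Fp_small; try lia.
by rewrite /sPi !ltn_ord !pvE.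
Qed.

Lemma W0u (tau : 'S_k) : Gw tau Fp 0 -> tau = pi.
Proof.
move=> H; apply: perm_order_uniq => i j.
by rewrite (Gw_lt H) (Gw_lt W0).
Qed.

Lemma W1 (tau : 'S_k) i : 0 < i < k -> Gw tau Fp i -> RF tau 1.
Proof.
move=> /andP [Hi1 Hi2] HG; apply: (RF_of_window HG) => j Hj.
rewrite !Fp_small; try lia.
rewrite /sPi (_ : i + k' < k = false); last by lia.
case: ifP => H; last by lia.
by have := pv_lt pi H; lia.
Qed.

Section Far.
Variable i : nat.
Hypothesis Hi : k <= i < k + k.
Local Notation l := (k + k - i).

Lemma Hw (j j' : nat) : j < j' < k ->
  (l <= j -> pv pi (j - l) < pv pi (j' - l)) -> Fp (i + j) < Fp (i + j').
Proof.
move=> /andP [Hjj Hj'] H.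
case: (ltnP j l) => Hjl.
  rewrite (Fp_small (y := i + j)); last by lia.
  rewrite /sPi (_ : i + j < k = false); last by lia.
  case: (ltnP j' l) => Hj'l.
    rewrite (Fp_small (y := i + j')); last by lia.
    rewrite /sPi (_ : i + j' < k = false); last by lia.
    lia.
  rewrite (Fp_big (y := i + j')); last by lia.
  lia.
rewrite (Fp_big (y := i + j)); last by lia.
rewrite (Fp_big (y := i + j')); last by lia.
have -> : i + j - (k + k) = j - l by lia.
have -> : i + j' - (k + k) = j' - l by lia.
rewrite /sPi (_ : j - l < k); last by lia.
rewrite (_ : j' - l < k); last by lia.
rewrite ltn_add2r; exact: H.
Qed.

Lemma W2 (tau : 'S_k) c : Gw tau Fp i -> LF pi c -> LF tau c.
Proof.
move=> HG /forallP H; apply/forallP => j; apply/forallP => j'; apply/implyP => /andP [Hjc Hjj].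
rewrite (Gw_lt HG); apply: Hw; first by rewrite Hjj ltn_ord.
move=> Hl.
have Hj0 := ltn_ord j; have Hj0' := ltn_ord j'.
have Ha : j - l < k by lia.
have Hb : j' - l < k by lia.
move/forallP: (H (Ordinal Ha)) => /(_ (Ordinal Hb)) /implyP Hc.
rewrite -[j - l]/(val (Ordinal Ha)) -[j' - l]/(val (Ordinal Hb)) !pvE.
apply: Hc; rewrite /=; apply/andP; split; lia.
Qed.

Lemma W3 (tau : 'S_k) : Gw tau Fp i -> ~~ RF pi 1 ->
  exists c : 'I_k, LF tau c && ~~ LF pi c.
Proof.
move=> HG HR.
have Hex : exists c, ~~ LF pi c.
  by exists k'; apply: contra HR; exact: LF_full.
case: (ex_minnP Hex) => c0 Hc0 Hmin.
have Hc0k : c0 < k.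
  have := Hmin k'; rewrite ltnS; apply; apply: contra HR; exact: LF_full.
exists (Ordinal Hc0k); rewrite /= Hc0 andbT.
apply/forallP => j; apply/forallP => j'; apply/implyP => /andP [Hjc Hjj].
rewrite (Gw_lt HG); apply: Hw; first by rewrite Hjj ltn_ord.
move=> Hl.
have Hj0 := ltn_ord j; have Hj0' := ltn_ord j'.
have Ha : j - l < k by lia.
have Hb : j' - l < k by lia.
have HLF : LF pi (j - l).
  apply/negPn/negP => Hn; have := Hmin _ Hn; lia.
move/forallP: HLF => /(_ (Ordinal Ha)) /forallP /(_ (Ordinal Hb)) /implyP Hc.
rewrite -[j - l]/(val (Ordinal Ha)) -[j' - l]/(val (Ordinal Hb)) !pvE.
apply: Hc; rewrite /=; apply/andP; split; lia.
Qed.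

End Far.

Definition pLF (tau : 'S_k) := #|[set c : 'I_k | LF tau c]|.

Lemma tri (tau : 'S_k) i : i < k + k -> ~~ RF pi 1 -> ~~ RF tau 1 -> tau != pi ->
  Gw tau Fp i -> pLF pi < pLF tau.
Proof.
move=> Hi HRp HRt Hne HG.
case: (posnP i) => Hi0.
  by move: HG; rewrite Hi0 => /W0u E; rewrite E eqxx in Hne.
case: (ltnP i k) => Hik.
  have Hi2 : 0 < i < k by rewrite Hi0 Hik.
  by have := W1 Hi2 HG; rewrite (negbTE HRt).
have Hi' : k <= i < k + k by rewrite Hik Hi.
apply: proper_card; apply/properP; split.
  apply/subsetP => c; rewrite !inE => Hc. exact: (@W2 i Hi' tau c HG Hc).
have [c /andP [H1 H2]] := W3 Hi' HG HRp.
by exists c; rewrite inE.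
Qed.

End Win.
Lemma restr_inj_on k' (p1 p2 : 'S_k'.+1) : RF p1 1 -> RF p2 1 -> restr p1 = restr p2 -> p1 = p2.
Proof.
move=> H1 H2 E; have := rel0_restr H1; rewrite E => Hr.
exact: rel0_uniq H2 H1 Hr.
Qed.

Lemma restr_avoid n k' (pi : 'S_k'.+1) : RF pi 1 -> pi \in Av n k'.+1 -> restr pi \in Av n k'.
Proof.
move=> H1; rewrite !inE /avoids; apply: contra => /existsP [idx /andP [/forallP Hinc Hpat]].
apply/existsP; exists [ffun j => widen_ord (leqnSn k') (idx j)]; apply/andP; split.
  apply/forallP => j; apply/forallP => j'; rewrite !ffunE /=.
  by move/forallP: (Hinc j) => /(_ j').
apply/forallP => j; apply/forallP => j'; rewrite !ffunE /=.
move/forallP: Hpat => /(_ j) /forallP /(_ j').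
by rewrite !pv_restr ?ltn_ord.
Qed.

Lemma card_Dset2 n k' : 2 <= n ->
  #|Av n k'.+1 :\: [set pi | RF pi 1]| = #|Av n k'.+1| - #|Av n k'|.
Proof.
move=> Hn; have H1 := card_Dset k' Hn.
suff H2 : #|Av n k'.+1 :&: [set pi | RF pi 1]| <= #|Av n k'|.
  have := cardsID [set pi | RF pi 1] (Av n k'.+1).
  move: H1 H2; set a := #|_ :&: _|; set b := #|_ :\: _|; set c := #|Av n k'|; set e := #|Av n k'.+1|. lia.
rewrite -(card_in_imset (f := @restr k')); last first.
  move=> p1 p2; rewrite !in_setI => /andP [_ Hp1] /andP [_ Hp2].
  by rewrite inE in Hp1; rewrite inE in Hp2; exact: restr_inj_on.
apply: subset_leq_card; apply/subsetP => r /imsetP [pi Hpi ->].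
move: Hpi; rewrite in_setI => /andP [Ha]; rewrite inE => Hr.
exact: restr_avoid Hr Ha.
Qed.

Section Lower.
Variable R : realType.
Local Open Scope ring_scope.

Definition vid k : 'S_k -> R :=
  fun tau => (count (Gw tau (perF 1 (fun _ => 0%N))) (iota 0 1))%:R / 1%:R.
Definition wpt k (pi : 'S_k) : 'S_k -> R :=
  fun tau => (count (Gw tau (perF (k + k) (sPi pi))) (iota 0 (k + k)))%:R / (k + k)%:R.

Lemma vid_Pset n k : (2 <= n)%N -> @Pset R n k (@vid k).
Proof.
move=> Hn; apply: per_point => //.
- by move=> x y Hx Hy _; lia.
- move=> o Ho Hdec.
  have H0 : (0 < n)%N by lia.
  have H1 : (1 < n)%N by [].
  have [H _] := Hdec (Ordinal H0) (Ordinal H1) isT.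
  by have := Ho (Ordinal H1); lia.
Qed.

Lemma wpt_Pset n k' (pi : 'S_k'.+1) : (2 <= n)%N -> pi \in Av n k'.+1 -> @Pset R n k'.+1 (wpt pi).
Proof.
move=> Hn Hpi; have [H1 H2] := sPi_good pi.
by apply: per_point => //; apply: sPi_favoid.
Qed.

Lemma vid_zero k' (tau : 'S_k'.+1) : ~~ RF tau 1 -> vid tau = 0.
Proof.
move=> HR; rewrite /vid /= addn0.
case HG: (Gw tau (perF 1 (fun _ => 0%N)) 0); last by rewrite mul0r.
exfalso; move/negP: HR; apply; apply: (RF_of_window HG) => j Hj.
by rewrite /perF !divn1 !muln1 !addn0 !add0n.
Qed.

Lemma wpt_pos k' (pi : 'S_k'.+1) : 0 < wpt pi pi.
Proof.
rewrite /wpt divr_gt0 // ltr0n // -has_count; apply/hasP; exists 0%N.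
  by rewrite mem_iota.
exact: W0.
Qed.

Lemma wpt_nz k' (pi tau : 'S_k'.+1) : wpt pi tau != 0 ->
  exists i, (i < k'.+1 + k'.+1)%N /\ Gw tau (perF (k'.+1 + k'.+1) (sPi pi)) i.
Proof.
rewrite /wpt; case E: (count _ _) => [|m]; first by rewrite mul0r eqxx.
move=> _; have : has (Gw tau (perF (k'.+1 + k'.+1) (sPi pi))) (iota 0 (k'.+1 + k'.+1)).
  by rewrite has_count E.
by move/hasP => [i]; rewrite mem_iota => /andP [_ Hi] HG; exists i.
Qed.

Lemma lower_bound n k' : (2 <= n)%N ->
  exists V : 'I_#|Av n k'.+1 :\: [set pi | RF pi 1]|.+1 -> ('S_k'.+1 -> R),
    (forall i, @Pset R n k'.+1 (V i)) /\ aff_indep V.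
Proof.
move=> Hn.
set Ds := Av n k'.+1 :\: [set pi | RF pi 1].
pose ps := fun j : 'I_#|Ds| => (enum_val j : 'S_k'.+1).
have HpsD : forall j, ps j \in Ds by move=> j; exact: enum_valP.
have HDs : forall x, x \in Ds -> ~~ RF x 1 /\ x \in Av n k'.+1.
  by move=> x; rewrite in_setD inE => /andP [].
pose V := fun i : 'I_#|Ds|.+1 => if unlift ord0 i is Some j then wpt (ps j) else @vid k'.+1.
exists V; split.
  move=> i; rewrite /V; case: unlift => [j|]; last exact: vid_Pset.
  by apply: wpt_Pset => //; have [] := HDs _ (HpsD j).
move=> c Hc.
have HV0 : V ord0 = @vid k'.+1 by rewrite /V unlift_none.
have HVl : forall j, V (lift ord0 j) = wpt (ps j) by move=> j; rewrite /V liftK.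
have Hx : forall x, x \in Ds -> \sum_j c j * wpt (ps j) x = 0.
  move=> x Hx; rewrite -[RHS](Hc x); apply: eq_bigr => j _.
  by rewrite HVl HV0 vid_zero ?subr0 //; have [] := HDs _ Hx.
move=> j0; apply/eqP/negPn/negP => Hj0.
case: (@arg_minnP _ j0 (fun j => c j != 0) (fun j => pLF (ps j)) Hj0) => js Hjs Hmin.
set x := ps js.
have [HRx _] := HDs _ (HpsD js).
have := Hx x (HpsD js); rewrite (bigD1 js) //= big1 ?addr0.
  move/eqP; rewrite mulf_eq0 (negbTE Hjs) /= => /eqP Hw.
  by have := wpt_pos x; rewrite Hw ltxx.
move=> j Hne; case: (eqVneq (c j) 0) => [->|Hcj]; first by rewrite mul0r.
case: (eqVneq (wpt (ps j) x) 0) => [->|Hw]; first by rewrite mulr0.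
exfalso; have [i [Hi HG]] := wpt_nz Hw.
have [HRj _] := HDs _ (HpsD j).
have Hxne : x != ps j.
  apply/eqP => E; move/eqP: Hne; apply; apply: enum_val_inj; rewrite -/(ps j) -/(ps js) -/x; done.
have := tri Hi HRj HRx Hxne HG.
have := Hmin j Hcj; lia.
Qed.

End Lower.

Theorem mainTheorem8 (R : realType) (n k : nat) :
  (2 <= n)%N -> (1 <= k)%N ->
  has_affine_dim (@Pset R n k) (#|Av n k| - #|Av n k.-1|)%N.
Proof.
move=> Hn; case: k => [//|k'] _ /=.
rewrite -(card_Dset2 k' Hn).
split.
  have [V [HV HI]] := lower_bound R k' Hn.
  by exists V; split.
move=> v Hv; exact: (upper_bound Hn (leqnn _) Hv).
Qed.
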